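(* Let $G$ be a random $(d_1,d_2)$-biregular bipartite graph with $d_2\leq d_1\leq n^{1/3}$. There is an absolute constant $c_1>0$ such that (for $n$ large enough): (1) If $H$ is a subgraph of $K_{n,m}$ in which every vertex has degree at least $2$, with $e$ edges where $e=o(n^{1/3})$, then $\mathbb P(H\subseteq G)\leq c_1\left(\frac{(d_1-1)(d_2-1)}{nm}\right)^{e/2}$. (2) If $\alpha$ is a cycle of length $2k$ in $K_{n,m}$ with $k\leq n^{1/10}$, then $\mathbb P(\alpha\subseteq G)\leq c_1\left(\frac{(d_1-1)(d_2-1)}{nm}\right)^{k}$. (3) If moreover $\beta$ is another cycle of length $2j\leq 2n^{1/10}$ in $K_{n,m}$ and $\alpha,\beta$ share $f$ edges, then $\mathbb P(\alpha\cup\beta\subseteq G)\leq c_1\left(\frac{(d_1-1)(d_2-1)}{nm}\right)^{j+k-f/2}$.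
   Context: A $(d_1,d_2)$-biregular bipartite graph on $V_1=[n]$, $V_2=[m]$ is a simple bipartite graph with all vertices in $V_1$ of degree $d_1$ and all in $V_2$ of degree $d_2$ ($nd_1=md_2$); a random one is chosen uniformly among all such. $K_{n,m}$ is the complete bipartite graph on $V_1\cup V_2$. Cycles are simple cycles. *)

(* Defs.v *)
From HB Require Import structures.
From mathcomp Require Import all_boot all_order all_algebra.
From mathcomp Require Import Rstruct.
From Stdlib Require Rdefinitions.
Notation R := Rdefinitions.R.
Set Implicit Arguments.
Unset Strict Implicit.
Unset Printing Implicit Defensive.
Import Order.TTheory GRing.Theory Num.Theory.
Local Open Scope ring_scope.

Notation bigraph n m := {set ('I_n * 'I_m)}.

Definition deg1 n m (E : bigraph n m) (i : 'I_n) : nat := #|[set j | (i, j) \in E]|.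
Definition deg2 n m (E : bigraph n m) (j : 'I_m) : nat := #|[set i | (i, j) \in E]|.

Definition biregular n m (d1 d2 : nat) (E : bigraph n m) : bool :=
  [forall i, deg1 E i == d1] && [forall j, deg2 E j == d2].

(* Every vertex of H (= every endpoint of an edge of H) has degree >= 2 in H. *)
Definition min_deg_ge2 n m (H : bigraph n m) : Prop :=
  (forall i, (0 < deg1 H i)%N -> (2 <= deg1 H i)%N) /\
  (forall j, (0 < deg2 H j)%N -> (2 <= deg2 H j)%N).

(* C is (the edge set of) a simple cycle of length 2k in K_{n,m}:
   a_0 b_0 a_1 b_1 ... a_{k-1} b_{k-1} a_0 with distinct vertices. *)
Definition is_cycle n m (k : nat) (C : bigraph n m) : Prop :=
  (2 <= k)%N /\
  exists (a : 'I_k -> 'I_n) (b : 'I_k -> 'I_m),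
    injective a /\ injective b /\
    C = [set (a i, b i) | i : 'I_k] :|: [set (a (ordS i), b i) | i : 'I_k].

Definition prob_sub n m (d1 d2 : nat) (F : bigraph n m) : R :=
  (#|[set G : bigraph n m | biregular d1 d2 G & F \subset G]|%:R
   / #|[set G : bigraph n m | biregular d1 d2 G]|%:R).

(* g(n) = o(n^{1/3}), written as g(n)^3 / n -> 0. *)
Definition little_o_cuberoot (g : nat -> nat) : Prop :=
  forall eps : R, 0 < eps -> exists N : nat, forall n : nat, (N <= n)%N ->
    (g n)%:R ^+ 3 <= eps * n%:R.

Definition bratio n m (d1 d2 : nat) : R := ((d1 - 1) * (d2 - 1))%N%:R / (n * m)%N%:R.

(* Main.v *)
Require Import Defs.
From HB Require Import structures.
From mathcomp Require Import all_boot all_order all_algebra.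
From mathcomp Require Import Rstruct.
From mathcomp Require Import zify ring lra.
Import Order.TTheory GRing.Theory Num.Theory.
Set Implicit Arguments.
Unset Strict Implicit.

Lemma deg1E n m (E : bigraph n m) i : deg1 E i = (\sum_j ((i,j) \in E))%N.
Proof.
rewrite /deg1 -sum1_card big_mkcond /=; apply: eq_bigr => j _; rewrite inE.
by case: ((i,j) \in E).
Qed.

Lemma deg2E n m (E : bigraph n m) j : deg2 E j = (\sum_i ((i,j) \in E))%N.
Proof.
rewrite /deg2 -sum1_card big_mkcond /=; apply: eq_bigr => i _; rewrite inE.
by case: ((i,j) \in E).
Qed.

Lemma cardE2 n m (E : bigraph n m) : #|E| = (\sum_i \sum_j ((i,j) \in E))%N.
Proof.
rewrite pair_big /= -sum1_card big_mkcond /=; apply: eq_bigr => -[i j] _ /=.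
by case: ((i,j) \in E).
Qed.

Lemma card_deg1 n m (E : bigraph n m) : #|E| = (\sum_i deg1 E i)%N.
Proof. by rewrite cardE2; apply: eq_bigr => i _; rewrite deg1E. Qed.

Lemma card_deg2 n m (E : bigraph n m) : #|E| = (\sum_j deg2 E j)%N.
Proof. by rewrite cardE2 exchange_big; apply: eq_bigr => i _; rewrite deg2E. Qed.

Lemma card_bireg n m d1 d2 (G : bigraph n m) : biregular d1 d2 G -> #|G| = (n * d1)%N.
Proof.
case/andP => /forallP h1 _; rewrite card_deg1 (eq_bigr (fun _ => d1)).
  by rewrite sum_nat_const card_ord.
by move=> i _; apply/eqP.
Qed.
Lemma card_pairs (T1 T2 : finType) (A : {set T1}) (f : T1 -> T2 -> bool) :
  #|[set z : T1 * T2 | (z.1 \in A) && f z.1 z.2]| = \sum_(x in A) \sum_y f x y.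
Proof.
transitivity (\sum_x \sum_y (((x \in A) && f x y) : nat)).
  rewrite pair_big /= -sum1_card big_mkcond /=; apply: eq_bigr => -[x y] _.
  by rewrite inE /=; case: (_ && _).
rewrite [RHS]big_mkcond /=; apply: eq_bigr => x _; case: (x \in A) => //=.
by rewrite big1.
Qed.

Lemma sum_eq1 (T : finType) (u : T) (F : T -> nat) :
  \sum_x ((x == u) * F x) = F u.
Proof.
by rewrite (bigD1 u) //= eqxx mul1n big1 ?addn0 // => x /negbTE ->.
Qed.

Lemma sum_pair_eq n m (i : 'I_n) (a : 'I_n) (b : 'I_m) :
  \sum_j (((i, j) == (a, b)) : nat) = (i == a).
Proof.
rewrite -[RHS]muln1 -(sum_eq1 b (fun _ => 1)) big_distrr /=.
by apply: eq_bigr => j _; rewrite xpair_eqE; case: (i == a); case: (j == b).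
Qed.

Lemma sum_pair_eq2 n m (j : 'I_m) (a : 'I_n) (b : 'I_m) :
  \sum_i (((i, j) == (a, b)) : nat) = (j == b).
Proof.
rewrite -[RHS]muln1 -(sum_eq1 a (fun _ => 1)) big_distrr /=.
by apply: eq_bigr => i _; rewrite xpair_eqE; case: (i == a); case: (j == b).
Qed.

Definition sw n m (u : 'I_n) (v : 'I_m) (G : bigraph n m) (p : 'I_n * 'I_m) : bigraph n m :=
  (G :\: [set (u, v); p]) :|: [set (u, p.2); (p.1, v)].

Definition valid n m (S : bigraph n m) u v (G : bigraph n m) (p : 'I_n * 'I_m) : bool :=
  [&& p \in G, p.1 != u, p.2 != v, p \notin S, (u, p.2) \notin G & (p.1, v) \notin G].

Definition back n m (S : bigraph n m) u v (G : bigraph n m) (p : 'I_n * 'I_m) : bool :=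
  [&& (u, p.2) \in G, (u, p.2) \notin S, (p.1, v) \in G & (p.1, v) \notin S].

Lemma sw_ind n m (S : bigraph n m) (u : 'I_n) (v : 'I_m) (G : bigraph n m) (x : 'I_n) (y : 'I_m) (q : 'I_n * 'I_m) :
  (u, v) \in G -> valid S u v G (x, y) ->
  ((q \in sw u v G (x, y)) + (q == (u, v)) + (q == (x, y)) =
   (q \in G) + (q == (u, y)) + (q == (x, v)))%N.
Proof.
move=> huv /and5P[hxy /= hxu hyv _ /andP[huy hxv]].
have vy : (v == y) = false by rewrite eq_sym (negbTE hyv).
have ux : (u == x) = false by rewrite eq_sym (negbTE hxu).
move: hxu hyv => /negbTE xu /negbTE yv.
move: huy hxv => /negbTE huy /negbTE hxv.
rewrite /sw !inE /=.
have [->|q1] := eqVneq q (u, v);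
  first by rewrite ?xpair_eqE ?eqxx ?vy ?yv ?ux ?xu /= ?huv ?hxy ?huy ?hxv ?andbF ?orbF.
have [->|q2] := eqVneq q (x, y);
  first by rewrite ?xpair_eqE ?eqxx ?vy ?yv ?ux ?xu /= ?huv ?hxy ?huy ?hxv ?andbF ?orbF.
have [->|q3] := eqVneq q (u, y);
  first by rewrite ?xpair_eqE ?eqxx ?vy ?yv ?ux ?xu /= ?huv ?hxy ?huy ?hxv ?andbF ?orbF.
have [->|q4] := eqVneq q (x, v);
  first by rewrite ?xpair_eqE ?eqxx ?vy ?yv ?ux ?xu /= ?huv ?hxy ?huy ?hxv ?andbF ?orbF.
by rewrite !addn0 /=; case: (q \in G).
Qed.

Lemma sw_deg1 n m (S : bigraph n m) (u : 'I_n) (v : 'I_m) (G : bigraph n m) (x : 'I_n) (y : 'I_m) i :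
  (u, v) \in G -> valid S u v G (x, y) -> deg1 (sw u v G (x, y)) i = deg1 G i.
Proof.
move=> huv hv.
have E : \sum_j (((i,j) \in sw u v G (x, y)) + ((i,j) == (u,v)) + ((i,j) == (x,y)))
       = \sum_j (((i,j) \in G) + ((i,j) == (u,y)) + ((i,j) == (x,v))).
  by apply: eq_bigr => j _; exact: (sw_ind _ huv hv).
move: E; rewrite !big_split /= !sum_pair_eq !deg1E.
by move/eqP; rewrite !eqn_add2r => /eqP.
Qed.

Lemma sw_deg2 n m (S : bigraph n m) (u : 'I_n) (v : 'I_m) (G : bigraph n m) (x : 'I_n) (y : 'I_m) j :
  (u, v) \in G -> valid S u v G (x, y) -> deg2 (sw u v G (x, y)) j = deg2 G j.
Proof.
move=> huv hv.
have E : \sum_i (((i,j) \in sw u v G (x, y)) + ((i,j) == (u,v)) + ((i,j) == (x,y)))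
       = \sum_i (((i,j) \in G) + ((i,j) == (u,y)) + ((i,j) == (x,v))).
  by apply: eq_bigr => i _; exact: (sw_ind _ huv hv).
move: E; rewrite !big_split /= !sum_pair_eq2 !deg2E.
move/eqP; rewrite -!addnA [(j == y) + _]addnC eqn_add2r.
by move/eqP.
Qed.

Lemma sw_bireg n m d1 d2 (S : bigraph n m) (u : 'I_n) (v : 'I_m) (G : bigraph n m) (x : 'I_n) (y : 'I_m) :
  (u, v) \in G -> valid S u v G (x, y) -> biregular d1 d2 G ->
  biregular d1 d2 (sw u v G (x, y)).
Proof.
move=> huv hv /andP[/forallP h1 /forallP h2]; apply/andP; split; apply/forallP.
  by move=> i; rewrite (sw_deg1 _ huv hv).
by move=> j; rewrite (sw_deg2 _ huv hv).
Qed.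

Lemma sw_inv n m (S : bigraph n m) (u : 'I_n) (v : 'I_m) (G : bigraph n m) (x : 'I_n) (y : 'I_m) :
  (u, v) \in G -> valid S u v G (x, y) ->
  (sw u v G (x, y) :\: [set (u, y); (x, v)]) :|: [set (u, v); (x, y)] = G.
Proof.
move=> huv /and5P[hxy /= hxu hyv _ /andP[huy hxv]].
apply/setP => q; rewrite /sw !inE /=.
have [->|q1] := eqVneq q (u, v); first by rewrite ?eqxx ?orbT.
have [->|q2] := eqVneq q (x, y); first by rewrite ?eqxx ?orbT.
have [->|q3] := eqVneq q (u, y); first by rewrite (negbTE huy).
have [->|q4] := eqVneq q (x, v); first by rewrite (negbTE hxv).
by rewrite /= !orbF.
Qed.

Lemma sw_props n m (S : bigraph n m) (u : 'I_n) (v : 'I_m) (G : bigraph n m) (x : 'I_n) (y : 'I_m) :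
  (u, v) \notin S -> S \subset G -> (u, v) \in G -> valid S u v G (x, y) ->
  [/\ S \subset sw u v G (x, y), (u, v) \notin sw u v G (x, y) &
      back S u v (sw u v G (x, y)) (x, y)].
Proof.
move=> huvS hSG huv /and5P[hxy /= hxu hyv hxyS /andP[huy hxv]].
have vy : (v == y) = false by rewrite eq_sym (negbTE hyv).
have ux : (u == x) = false by rewrite eq_sym (negbTE hxu).
split.
- apply/subsetP => q hq; rewrite /sw !inE (subsetP hSG _ hq) andbT.
  apply/orP; left; apply/negP => /orP[] /eqP hq'; subst q.
    by rewrite hq in huvS.
  by rewrite hq in hxyS.
- by rewrite /sw !inE /= !xpair_eqE !eqxx ux vy /=.
- rewrite /back /sw !inE /= !eqxx /= !orbT /=.
  apply/andP; split; apply/negP => h.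
    by rewrite (subsetP hSG _ h) in huy.
  by rewrite (subsetP hSG _ h) in hxv.
Qed.

Lemma sum_pairE (T1 T2 : finType) (F : T1 * T2 -> nat) :
  \sum_p F p = \sum_x \sum_y F (x, y).
Proof. by rewrite pair_big; apply: eq_bigr => -[x y]. Qed.

Lemma valid_lb n m d1 d2 (S : bigraph n m) (u : 'I_n) (v : 'I_m) (G : bigraph n m) :
  biregular d1 d2 G ->
  n * d1 <= \sum_p valid S u v G p + (#|S| + d1 + d2 + 2 * d1 * d2).
Proof.
move=> hG; have [/forallP h1 /forallP h2] := andP hG.
rewrite -(card_bireg hG) cardE2 sum_pairE.
have -> : #|S| = \sum_x \sum_y ((x, y) \in S) by rewrite cardE2.
have -> : 2 * d1 * d2 = \sum_x \sum_y (((u, y) \in G) * ((x, y) \in G) + ((x, v) \in G) * ((x, y) \in G)).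
  rewrite -mulnA mul2n -addnn.
  rewrite (eq_bigr (fun x => \sum_y (((u, y) \in G) * ((x, y) \in G)) + \sum_y (((x, v) \in G) * ((x, y) \in G)))); last first.
    by move=> x _; rewrite big_split.
  rewrite big_split /=; congr (_ + _).
    rewrite exchange_big /=.
    rewrite (eq_bigr (fun y => ((u, y) \in G) * d2)); last first.
      by move=> y _; rewrite -big_distrr /= -deg2E (eqP (h2 y)).
    by rewrite -big_distrl /= -deg1E (eqP (h1 u)).
  rewrite (eq_bigr (fun x => ((x, v) \in G) * d1)); last first.
    by move=> x _; rewrite -big_distrr /= -deg1E (eqP (h1 x)).
  by rewrite -big_distrl /= -deg2E (eqP (h2 v)) mulnC.
have -> : d1 = \sum_x \sum_y ((x == u) * ((x, y) \in G)).
  rewrite (eq_bigr (fun x => (x == u) * \sum_y ((x, y) \in G))); last first.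
    by move=> x _; rewrite big_distrr.
  by rewrite sum_eq1 -deg1E (eqP (h1 u)).
have -> : d2 = \sum_x \sum_y ((y == v) * ((x, y) \in G)).
  rewrite exchange_big /=.
  rewrite (eq_bigr (fun y => (y == v) * \sum_x ((x, y) \in G))); last first.
    by move=> y _; rewrite big_distrr.
  by rewrite sum_eq1 -deg2E (eqP (h2 v)).
rewrite -!big_split /=; apply: leq_sum => x _.
rewrite -!big_split /=; apply: leq_sum => y _.
rewrite /valid /=.
case: ((x, y) \in G); case: (x == u); case: (y == v); case: ((x, y) \in S);
  case: ((u, y) \in G); case: ((x, v) \in G); rewrite /= ?addn0 ?addnA //.
Qed.

Lemma row_minus n m (S G : bigraph n m) (u : 'I_n) :
  S \subset G -> \sum_y (((u, y) \in G) && ((u, y) \notin S)) = deg1 G u - deg1 S u.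
Proof.
move=> hSG; rewrite !deg1E.
have -> : \sum_y ((u, y) \in G) = \sum_y (((u, y) \in G) && ((u, y) \notin S)) + \sum_y ((u, y) \in S).
  rewrite -big_split /=; apply: eq_bigr => y _.
  case hS: ((u, y) \in S); first by rewrite (subsetP hSG _ hS) andbF.
  by rewrite andbT addn0.
by rewrite addnK.
Qed.

Lemma col_minus n m (S G : bigraph n m) (v : 'I_m) :
  S \subset G -> \sum_x (((x, v) \in G) && ((x, v) \notin S)) = deg2 G v - deg2 S v.
Proof.
move=> hSG; rewrite !deg2E.
have -> : \sum_x ((x, v) \in G) = \sum_x (((x, v) \in G) && ((x, v) \notin S)) + \sum_x ((x, v) \in S).
  rewrite -big_split /=; apply: eq_bigr => x _.
  case hS: ((x, v) \in S); first by rewrite (subsetP hSG _ hS) andbF.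
  by rewrite andbT addn0.
by rewrite addnK.
Qed.

Lemma back_ub n m d1 d2 (S : bigraph n m) (u : 'I_n) (v : 'I_m) (G : bigraph n m) :
  biregular d1 d2 G -> S \subset G ->
  \sum_p back S u v G p = (d1 - deg1 S u) * (d2 - deg2 S v).
Proof.
move=> hG hSG; have [/forallP h1 /forallP h2] := andP hG.
rewrite -(eqP (h1 u)) -(eqP (h2 v)) -row_minus // -col_minus // sum_pairE mulnC big_distrl /=.
apply: eq_bigr => x _; rewrite big_distrr /=; apply: eq_bigr => y _.
rewrite /back /=.
by case: ((u, y) \in G); case: ((u, y) \in S); case: ((x, v) \in G); case: ((x, v) \in S).
Qed.

Definition cnt n m d1 d2 (S : bigraph n m) : nat :=
  #|[set G : bigraph n m | biregular d1 d2 G & S \subset G]|.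

Lemma switch_count n m d1 d2 (S : bigraph n m) (u : 'I_n) (v : 'I_m) :
  (u, v) \notin S ->
  cnt d1 d2 ((u, v) |: S) * (n * d1 - (#|S| + d1 + d2 + 2 * d1 * d2))
  <= cnt d1 d2 S * ((d1 - deg1 S u) * (d2 - deg2 S v)).
Proof.
move=> huvS.
set A := [set G : bigraph n m | biregular d1 d2 G & (u, v) |: S \subset G].
set B := [set G : bigraph n m | biregular d1 d2 G & S \subset G].
set B' := [set G : bigraph n m | [&& biregular d1 d2 G, S \subset G & (u, v) \notin G]].
set P := [set z : bigraph n m * ('I_n * 'I_m) | (z.1 \in A) && valid S u v z.1 z.2].
set Q := [set z : bigraph n m * ('I_n * 'I_m) | (z.1 \in B') && back S u v z.1 z.2].
set c := #|S| + d1 + d2 + 2 * d1 * d2.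
set K := (d1 - deg1 S u) * (d2 - deg2 S v).
have step1 : #|A| * (n * d1 - c) <= #|P|.
  rewrite card_pairs -sum_nat_const; apply: leq_sum => G; rewrite inE => /andP[hG _].
  by rewrite leq_subLR addnC; apply: valid_lb.
have step3 : #|Q| <= #|B| * K.
  rewrite card_pairs -sum_nat_const.
  apply: (@leq_trans (\sum_(G in B') K)).
    apply: leq_sum => G; rewrite inE => /and3P[hG hSG _].
    by rewrite (@back_ub n m d1 d2 S u v G hG hSG).
  rewrite !sum_nat_const leq_mul2r; apply/orP; right.
  apply: subset_leq_card; apply/subsetP => G; rewrite !inE => /and3P[-> -> _] //.
have step2 : #|P| <= #|Q|.
  pose phi (z : bigraph n m * ('I_n * 'I_m)) := (sw u v z.1 z.2, z.2).
  have inj : {in P &, injective phi}.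
    move=> [G [x y]] [G' [x' y']]; rewrite !inE /= => /andP[hA hv] /andP[hA' hv'].
    rewrite /phi /= => -[e1 e2 e3]; subst x' y'.
    have [_ hs] := andP hA; have [_ hs'] := andP hA'.
    have huv : (u, v) \in G by apply: (subsetP hs); rewrite !inE eqxx.
    have huv' : (u, v) \in G' by apply: (subsetP hs'); rewrite !inE eqxx.
    by rewrite -(sw_inv huv hv) -(sw_inv huv' hv') e1.
  rewrite -(card_in_imset inj); apply: subset_leq_card; apply/subsetP => z.
  case/imsetP => -[G [x y]]; rewrite inE /= => /andP[hA hv] ->.
  rewrite inE in hA; have [hG hs] := andP hA.
  have huv : (u, v) \in G by apply: (subsetP hs); rewrite !inE eqxx.
  have hSG : S \subset G by apply: subset_trans hs; apply/subsetP => q hq; rewrite !inE hq orbT.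
  have [h1 h2 h3] := sw_props huvS hSG huv hv.
  rewrite inE /= h3 andbT inE h1 h2 !andbT. exact: (@sw_bireg n m d1 d2 S u v G x y huv hv hG).
rewrite /cnt -/A -/B -/c -/K.
exact: leq_trans step1 (leq_trans step2 step3).
Qed.

Definition Qw n m d1 d2 (H : bigraph n m) : nat :=
  (\prod_i d1 ^_ (deg1 H i)) * (\prod_j d2 ^_ (deg2 H j)).

Lemma deg1_add n m (S : bigraph n m) (u : 'I_n) (v : 'I_m) i :
  (u, v) \notin S -> deg1 ((u, v) |: S) i = deg1 S i + (i == u).
Proof.
move=> huv; rewrite !deg1E -(@sum_pair_eq n m i u v) -big_split /=; apply: eq_bigr => j _.
rewrite !inE; have [e|_] := eqVneq (i, j) (u, v).
by rewrite e (negbTE huv). by rewrite addn0.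
Qed.

Lemma deg2_add n m (S : bigraph n m) (u : 'I_n) (v : 'I_m) j :
  (u, v) \notin S -> deg2 ((u, v) |: S) j = deg2 S j + (j == v).
Proof.
move=> huv; rewrite !deg2E -(@sum_pair_eq2 n m j u v) -big_split /=; apply: eq_bigr => i _.
rewrite !inE; have [e|_] := eqVneq (i, j) (u, v).
by rewrite e (negbTE huv). by rewrite addn0.
Qed.

Lemma prod_bump (T : finType) (f : T -> nat) (u : T) d :
  \prod_i d ^_ (f i + (i == u)) = \prod_i d ^_ (f i) * (d - f u).
Proof.
rewrite (bigD1 u) // [X in _ = X * _](bigD1 u) //= eqxx addn1 ffactnSr.
rewrite -mulnA [in RHS]mulnAC -[in RHS]mulnA; congr (_ * _); congr (_ * _).
by apply: eq_bigr => i /negbTE ->; rewrite addn0.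
Qed.

Lemma Qw_add n m d1 d2 (S : bigraph n m) (u : 'I_n) (v : 'I_m) :
  (u, v) \notin S ->
  Qw d1 d2 ((u, v) |: S) = Qw d1 d2 S * ((d1 - deg1 S u) * (d2 - deg2 S v)).
Proof.
move=> huv; rewrite /Qw.
rewrite (eq_bigr (fun i => d1 ^_ (deg1 S i + (i == u)))); last by move=> i _; rewrite deg1_add.
rewrite [X in _ * X](eq_bigr (fun j => d2 ^_ (deg2 S j + (j == v)))); last by move=> j _; rewrite deg2_add.
rewrite !prod_bump; ring.
Qed.

Lemma Qw0 n m d1 d2 : Qw d1 d2 (set0 : bigraph n m) = 1.
Proof.
rewrite /Qw !big1 // => i _; rewrite ?deg1E ?deg2E big1 // => j _; by rewrite inE.
Qed.

Lemma induct n m d1 d2 (E : nat) (H : bigraph n m) :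
  #|H| <= E ->
  cnt d1 d2 H * (n * d1 - (E + d1 + d2 + 2 * d1 * d2)) ^ #|H|
  <= cnt d1 d2 (set0 : bigraph n m) * Qw d1 d2 H.
Proof.
set F0 := n * d1 - _.
suff h : forall k (H : bigraph n m), #|H| = k -> k <= E ->
    cnt d1 d2 H * F0 ^ k <= cnt d1 d2 (set0 : bigraph n m) * Qw d1 d2 H.
  by move=> hE; exact: h.
elim=> [|k IH] {}H hk hE.
  move/eqP: hk; rewrite cards_eq0 => /eqP ->; by rewrite Qw0 expn0.
have [[u v] huv] : exists e, e \in H.
  by apply/set0Pn; rewrite -card_gt0 hk.
set S := H :\ (u, v).
have hS : (u, v) \notin S by rewrite !inE eqxx.
have HS : H = (u, v) |: S by rewrite setD1K.
have cS : #|S| = k by move: hk; rewrite HS cardsU1 hS add1n => -[].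
have IHS := IH S cS (leq_trans (leqnSn _) hE).
rewrite HS Qw_add // -cS expnS mulnA.
apply: (@leq_trans (cnt d1 d2 S * ((d1 - deg1 S u) * (d2 - deg2 S v)) * F0 ^ #|S|)).
  rewrite leq_mul2r; apply/orP; right.
  apply: leq_trans (switch_count d1 d2 hS); rewrite leq_mul2l; apply/orP; right.
  rewrite /F0 leq_sub2l // !leq_add2r cS.
  exact: leq_trans (leqnSn _) hE.
rewrite cS mulnAC [X in _ <= X]mulnA; exact: leq_mul IHS (leqnn _).
Qed.

Lemma ffact_sq d h : h != 1 -> d ^_ h * d ^_ h <= (d * (d - 1)) ^ h.
Proof.
case: h => [|[|h]] // _.
elim: h => [|h IH].
  by rewrite ffactnS ffactn1 subn1 expnS expn1.
rewrite ffactnSr expnS.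
have le1 : d - h.+2 <= d - 1 by apply: leq_sub2l.
have le2 : (d - h.+2) * (d - h.+2) <= d * (d - 1).
  apply: leq_mul => //; apply: leq_trans le1 (leq_subr _ _).
rewrite mulnACA mulnC; exact: leq_mul.
Qed.

Lemma Qw_sq n m d1 d2 (H : bigraph n m) : min_deg_ge2 H ->
  Qw d1 d2 H * Qw d1 d2 H <= (d1 * (d1 - 1) * (d2 * (d2 - 1))) ^ #|H|.
Proof.
case=> h1 h2; rewrite /Qw mulnACA expnMn; apply: leq_mul.
  rewrite -big_split /= card_deg1 expn_sum; apply: leq_prod => i _.
  apply: ffact_sq; case e: (deg1 H i) => [|[|k]] //.
  by have := h1 i; rewrite e; move=> /(_ isT).
rewrite -big_split /= card_deg2 expn_sum; apply: leq_prod => j _.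
apply: ffact_sq; case e: (deg2 H j) => [|[|k]] //.
by have := h2 j; rewrite e; move=> /(_ isT).
Qed.

Local Open Scope ring_scope.

Lemma bern (y : R) (e : nat) : 0 <= y -> y <= 1 -> 1 - e%:R * y <= (1 - y) ^+ e.
Proof.
move=> y0 y1; elim: e => [|e IH]; first by rewrite expr0 mul0r subr0.
rewrite exprSr -natr1.
have h1 : 0 <= 1 - y by rewrite subr_ge0.
have := ler_wpM2r h1 IH.
have : 0 <= e%:R * y * y by rewrite mulr_ge0 // mulr_ge0 // ler0n.
move=> h2 h3; apply: le_trans h3; nra.
Qed.

Lemma cnt_le n m d1 d2 (H : bigraph n m) : (cnt d1 d2 H <= cnt d1 d2 (set0 : bigraph n m))%N.
Proof.
apply: subset_leq_card; apply/subsetP => G; rewrite !inE => /andP[-> _].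
by rewrite sub0set.
Qed.

Lemma prob_cnt n m d1 d2 (H : bigraph n m) :
  prob_sub d1 d2 H = (cnt d1 d2 H)%:R / (cnt d1 d2 (set0 : bigraph n m))%:R.
Proof.
rewrite /prob_sub /cnt; congr (_ / _%:R); apply: eq_card => G.
by rewrite !inE sub0set andbT.
Qed.

Lemma prob_ge0 n m d1 d2 (H : bigraph n m) : 0 <= prob_sub d1 d2 H.
Proof. by rewrite /prob_sub divr_ge0 // ler0n. Qed.

Lemma prob_le1 n m d1 d2 (H : bigraph n m) : prob_sub d1 d2 H <= 1.
Proof.
rewrite prob_cnt; have [->|p0] := eqVneq (cnt d1 d2 (set0 : bigraph n m)) 0%N.
  by rewrite invr0 mulr0.
rewrite ler_pdivrMr ?ltr0n ?lt0n // mul1r ler_nat; exact: cnt_le.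
Qed.

Lemma bratio_ge0 n m d1 d2 : 0 <= bratio n m d1 d2.
Proof. by rewrite /bratio divr_ge0 // ler0n. Qed.

Lemma main_bound n m d1 d2 (H : bigraph n m) :
  (n * d1 = m * d2)%N -> min_deg_ge2 H ->
  (2 * #|H| * (#|H| + d1 + d2 + 2 * d1 * d2) <= n)%N ->
  prob_sub d1 d2 H <= 2 * Num.sqrt (bratio n m d1 d2) ^+ #|H|.
Proof.
move=> hnm hH hsmall.
set e := #|H|; set s := Num.sqrt (bratio n m d1 d2).
have s0 : 0 <= s by apply: sqrtr_ge0.
have rhs0 : 0 <= 2 * s ^+ e by rewrite mulr_ge0 // exprn_ge0.
have [e0|epos] := eqVneq e 0%N.
  by rewrite e0 expr0 mulr1; apply: le_trans (prob_le1 _ _ _) _; lra.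
have [d10|d1pos] := eqVneq d1 0%N.
  rewrite prob_cnt.
  suff -> : cnt d1 d2 H = 0%N by rewrite mul0r.
  apply/eqP; rewrite cards_eq0; apply/eqP/setP => G; rewrite !inE.
  apply/negP => /andP[hG hHG].
  have := card_bireg hG; rewrite d10 muln0 => /eqP; rewrite cards_eq0 => /eqP GE.
  move: hHG; rewrite GE subset0 => /eqP HE.
  by move: epos; rewrite /e HE cards0.
set c := (e + d1 + d2 + 2 * d1 * d2)%N.
set M := (n * d1)%N.
have nM : (n <= M)%N by rewrite /M leq_pmulr // lt0n.
have ecM : (2 * e * c <= M)%N by apply: leq_trans hsmall nM.
have cM : (2 * c <= M)%N.
  have e1 : (0 < e)%N by rewrite lt0n.
  apply: leq_trans ecM; nia.
have Mpos : (0 < M)%N.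
  have e1 : (0 < e)%N by rewrite lt0n.
  apply: leq_trans nM; apply: leq_trans hsmall; rewrite /c; nia.
set F0 := (M - c)%N.
have hind := induct d1 d2 (leqnn e).
rewrite -/c -/M -/F0 in hind.
have hQ := Qw_sq d1 d2 hH.
rewrite prob_cnt.
set CH := cnt d1 d2 H in hind *; set C0 := cnt d1 d2 (set0 : bigraph n m) in hind *.
have [C00|C0pos] := eqVneq C0 0%N.
  by rewrite C00 invr0 mulr0.
have MR : (0 : R) < M%:R by rewrite ltr0n.
have F0R : F0%:R = M%:R - c%:R :> R by rewrite natrB //; apply: leq_trans cM; rewrite leq_pmull.
have hy0 : (0 : R) <= c%:R / M%:R by rewrite divr_ge0 // ler0n.
have hy1 : e%:R * (c%:R / M%:R) <= 1 / 2 :> R.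
  have h : 2 * (e%:R * c%:R) <= M%:R :> R.
    by rewrite -natrM -(natrM _ 2) ler_nat mulnA.
  rewrite mulrA ler_pdivrMr //; lra.
have hy1' : c%:R / M%:R <= 1 :> R.
  by rewrite ler_pdivrMr // mul1r ler_nat; apply: leq_trans cM; rewrite leq_pmull.
have hb := bern e hy0 (le_trans hy1' (lexx _)).
have hF0 : F0%:R = M%:R * (1 - c%:R / M%:R) :> R.
  by rewrite F0R mulrBr mulr1 mulrC divfK // gt_eqF.
have hMF : M%:R ^+ e <= 2 * F0%:R ^+ e :> R.
  rewrite hF0 exprMn mulrCA.
  have : (1 : R) / 2 <= (1 - c%:R / M%:R) ^+ e.
    apply: le_trans hb; lra.
  move=> h; rewrite -{1}[M%:R ^+ e]mulr1; apply: ler_wpM2l; first exact: exprn_ge0 (ltW MR).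
  lra.
have F0pos : (0 : R) < F0%:R ^+ e.
  apply: exprn_gt0; rewrite hF0 mulr_gt0 //.
  have : e%:R * (c%:R / M%:R) >= c%:R / M%:R :> R.
    rewrite ler_peMl //; rewrite ler1n lt0n epos //.
  lra.
have hQR : (Qw d1 d2 H)%:R <= (M%:R * s) ^+ e :> R.
  have X0 : (0 : R) <= (M%:R * s) ^+ e by rewrite exprn_ge0 // mulr_ge0 // ler0n.
  have hsq : (Qw d1 d2 H)%:R * (Qw d1 d2 H)%:R <= ((M%:R * s) ^+ e) * ((M%:R * s) ^+ e) :> R.
    rewrite -natrM; apply: le_trans (_ : ((d1 * (d1 - 1) * (d2 * (d2 - 1))) ^ e)%:R <= _).
      by rewrite ler_nat.
    rewrite -exprMn natrX.
    suff -> : M%:R * s * (M%:R * s) = (d1 * (d1 - 1) * (d2 * (d2 - 1)))%:R :> R by [].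
    rewrite -expr2 exprMn /s sqr_sqrtr ?bratio_ge0 // /bratio.
    have nm0 : ((n * m)%N%:R : R) != 0.
      have npos : (0 < n)%N by move: Mpos; rewrite /M muln_gt0 => /andP[].
      have mpos : (0 < m)%N by move: Mpos; rewrite /M hnm muln_gt0 => /andP[].
      by rewrite pnatr_eq0 muln_eq0 negb_or -!lt0n npos mpos.
    rewrite expr2 -natrM /M.
    have -> : (n * d1 * (n * d1) = (n * m) * (d1 * d2))%N by rewrite {2}hnm; ring.
    rewrite natrM.
    have -> : (d1 * (d1 - 1) * (d2 * (d2 - 1)))%:R = (d1 * d2)%:R * ((d1 - 1) * (d2 - 1))%:R :> R.
      by rewrite -natrM; congr (_%:R); ring.
    move: nm0; set a := ((n * m)%N%:R : R); set b := ((d1 * d2)%N%:R : R); set p := (((d1 - 1) * (d2 - 1))%N%:R : R) => nm0.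
    by rewrite mulrAC [p / a]mulrC !mulrA mulfV // mul1r mulrC.
  have Q0 : (0 : R) <= (Qw d1 d2 H)%:R by rewrite ler0n.
  nra.
rewrite ler_pdivrMr ?ltr0n ?lt0n //.
rewrite -(ler_pM2r F0pos).
have h1 : CH%:R * F0%:R ^+ e <= C0%:R * (Qw d1 d2 H)%:R :> R.
  by rewrite -natrX -!natrM ler_nat.
apply: le_trans h1 _.
have C0R : (0 : R) <= C0%:R by rewrite ler0n.
apply: le_trans (ler_wpM2l C0R hQR) _.
rewrite exprMn.
have := ler_wpM2r (exprn_ge0 e s0) hMF.
have := ler_wpM2l C0R (ler_wpM2r (exprn_ge0 e s0) hMF).
move=> h _; apply: le_trans h _.
by rewrite le_eqVlt; apply/orP; left; apply/eqP; ring.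
Qed.

Local Close Scope ring_scope.

Lemma ordS_neq k (i : 'I_k) : (2 <= k)%N -> ordS i != i.
Proof.
move=> k2; apply/negP => /eqP /(congr1 val) /=.
have := ltn_ord i; rewrite leq_eqVlt => /orP[/eqP ik|ik].
  by rewrite ik modnn => i0; move: ik; rewrite -i0 => k1; rewrite -k1 in k2.
by rewrite modn_small // => /eqP; rewrite eqn_leq ltnn.
Qed.

Lemma two_le_card (T : finType) (A : {set T}) x y : x \in A -> y \in A -> x != y -> (2 <= #|A|)%N.
Proof.
move=> hx hy xy; have <- : (x != y).+1 = 2 by rewrite xy.
rewrite -cards2.
by apply: subset_leq_card; apply/subsetP => z; rewrite !inE => /orP[] /eqP ->.
Qed.

Lemma cycle_props n m k (C : bigraph n m) : is_cycle k C ->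
  #|C| = (2 * k)%N /\ min_deg_ge2 C.
Proof.
case=> k2 [a [b [ia [ib ->]]]].
set X := [set (a i, b i) | i : 'I_k]; set Y := [set (a (ordS i), b i) | i : 'I_k].
have cX : #|X| = k.
  by rewrite card_imset ?card_ord // => i j [] /ia.
have cY : #|Y| = k.
  by rewrite card_imset ?card_ord // => i j [] _ /ib.
have XY : X :&: Y = set0.
  apply/setP => p; rewrite !inE; apply/negP => /andP[/imsetP[i _ ->] /imsetP[j _ []]].
  move=> e1 /ib e2; subst j; move: e1 => /ia e1.
  by move: (ordS_neq i k2); rewrite -e1 eqxx.
split; first by rewrite cardsU XY cards0 subn0 cX cY mul2n addnn.
split.
- move=> x; rewrite deg1E => /lt0n_neq0; rewrite sum_nat_eq0 => /forallPn [y].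
  rewrite /= eqb0 negbK => hxy.
  have [t ht] : exists t, x = a t.
    move: hxy; rewrite !inE => /orP[] /imsetP[i _ []] -> _; by eexists.
  rewrite -deg1E /deg1; apply: (two_le_card (x := b t) (y := b (ord_pred t))).
  + by rewrite !inE; apply/orP; left; apply/imsetP; exists t => //; rewrite ht.
  + rewrite !inE; apply/orP; right; apply/imsetP; exists (ord_pred t) => //.
    by rewrite ord_predK ht.
  + apply/negP => /eqP /ib e.
    by move: (ordS_neq (ord_pred t) k2); rewrite ord_predK -e eqxx.
- move=> y; rewrite deg2E => /lt0n_neq0; rewrite sum_nat_eq0 => /forallPn [x].
  rewrite /= eqb0 negbK => hxy.
  have [t ht] : exists t, y = b t.
    move: hxy; rewrite !inE => /orP[] /imsetP[i _ []] _ ->; by eexists.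
  rewrite -deg2E /deg2; apply: (two_le_card (x := a t) (y := a (ordS t))).
  + by rewrite !inE; apply/orP; left; apply/imsetP; exists t => //; rewrite ht.
  + by rewrite !inE; apply/orP; right; apply/imsetP; exists t => //; rewrite ht.
  + apply/negP => /eqP /ia e.
    by move: (ordS_neq t k2); rewrite -e eqxx.
Qed.

Lemma deg1U n m (A B : bigraph n m) i : (deg1 (A :|: B) i <= deg1 A i + deg1 B i)%N.
Proof.
rewrite !deg1E -big_split /=; apply: leq_sum => j _; rewrite inE.
by case: ((i, j) \in A); case: ((i, j) \in B).
Qed.

Lemma deg2U n m (A B : bigraph n m) j : (deg2 (A :|: B) j <= deg2 A j + deg2 B j)%N.
Proof.
rewrite !deg2E -big_split /=; apply: leq_sum => i _; rewrite inE.
by case: ((i, j) \in A); case: ((i, j) \in B).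
Qed.

Lemma min_deg_U n m (A B : bigraph n m) : min_deg_ge2 A -> min_deg_ge2 B -> min_deg_ge2 (A :|: B).
Proof.
case=> a1 a2 [b1 b2]; split.
- move=> i h.
  have sA : (deg1 A i <= deg1 (A :|: B) i)%N.
    by apply: subset_leq_card; apply/subsetP => j; rewrite !inE => ->.
  have sB : (deg1 B i <= deg1 (A :|: B) i)%N.
    by apply: subset_leq_card; apply/subsetP => j; rewrite !inE => ->; rewrite orbT.
  case: (posnP (deg1 A i)) => hA; last exact: leq_trans (a1 _ hA) sA.
  case: (posnP (deg1 B i)) => hB; last exact: leq_trans (b1 _ hB) sB.
  by move: h (deg1U A B i); rewrite hA hB; case: (deg1 _ i).
- move=> i h.
  have sA : (deg2 A i <= deg2 (A :|: B) i)%N.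
    by apply: subset_leq_card; apply/subsetP => j; rewrite !inE => ->.
  have sB : (deg2 B i <= deg2 (A :|: B) i)%N.
    by apply: subset_leq_card; apply/subsetP => j; rewrite !inE => ->; rewrite orbT.
  case: (posnP (deg2 A i)) => hA; last exact: leq_trans (a2 _ hA) sA.
  case: (posnP (deg2 B i)) => hB; last exact: leq_trans (b2 _ hB) sB.
  by move: h (deg2U A B i); rewrite hA hB; case: (deg2 _ i).
Qed.

Lemma hc_le d1 d2 : d2 <= d1 -> d1 + d2 + 2 * d1 * d2 <= 4 * (d1 * d1).
Proof.
move=> h; case: d1 h => [|d1] h; first by move: h; rewrite leqn0 => /eqP ->.
nia.
Qed.

Lemma num1 K e n d1 d2 : 20 <= K -> (K * e) ^ 3 <= n -> d1 ^ 3 <= n -> d2 <= d1 ->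
  2 * e * (e + d1 + d2 + 2 * d1 * d2) <= n.
Proof.
move=> K20 h1 h2 h12.
have hc := hc_le h12.
have hA : K * e * (d1 * d1) <= n.
  rewrite -(@leq_exp2r _ _ 3) // expnMn.
  have -> : (d1 * d1) ^ 3 = d1 ^ 3 * d1 ^ 3 by rewrite expnMn.
  have -> : n ^ 3 = n * (n * n) by rewrite !expnS expn0 muln1.
  by apply: leq_mul => //; apply: leq_mul.
have hB : K * K * K * (e * e * e) <= n.
  by move: h1; rewrite !expnS expn0 !muln1; nia.
have hA' : 20 * (e * (d1 * d1)) <= n.
  by apply: leq_trans hA; rewrite -mulnA; exact: leq_mul.
have hB' : 20 * 20 * 20 * (e * e * e) <= n.
  apply: leq_trans hB; apply: leq_mul => //.
  exact: (leq_mul (leq_mul K20 K20) K20).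
clear h1 hA hB.
case: e hA' hB' => [|e] hA' hB'; first by rewrite muln0 mul0n.
set e' := e.+1 in hA' hB' *.
have hee : e' * e' <= e' * e' * e' by rewrite leq_pmulr.
set c := d1 + d2 + 2 * d1 * d2 in hc *.
have F : 2 * e' * c <= 8 * (e' * (d1 * d1)).
  apply: leq_trans (_ : 2 * e' * (4 * (d1 * d1)) <= _).
    by rewrite leq_mul2l hc orbT.
  by rewrite !mulnA [2 * e' * 4]mulnAC.
have -> : 2 * e' * (e' + d1 + d2 + 2 * d1 * d2) = 2 * (e' * e') + 2 * e' * c by rewrite /c; ring.
move: F hee hA' hB'.
move: (e' * e' * e') => y; move: (e' * e') (e' * (d1 * d1)) (2 * e' * c) => x z w.
lia.
Qed.

Lemma num2 K t e n d1 d2 : 64 <= K -> K ^ 5 <= n -> t ^ 10 <= n -> d1 ^ 3 <= n -> d2 <= d1 ->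
  e <= 4 * t -> 2 * e * (e + d1 + d2 + 2 * d1 * d2) <= n.
Proof.
move=> K64 hK ht hd h12 het.
have hc := hc_le h12.
have Kp : 0 < K by apply: leq_trans K64.
have n1 : 0 < n by apply: leq_trans hK; rewrite expn_gt0 Kp.
have hT : K * (t * t) <= n.
  rewrite -(@leq_exp2r _ _ 5) // expnMn.
  have -> : (t * t) ^ 5 = t ^ 10 by rewrite expnMn -expnD.
  apply: (@leq_trans (n * n)); first exact: leq_mul.
  by rewrite mulnn; apply: leq_pexp2l.
have hD : K * (t * (d1 * d1)) <= n.
  rewrite -(@leq_exp2r _ _ 30) // !expnMn.
  have -> : K ^ 30 = (K ^ 5) ^ 6 by rewrite -expnM.
  have -> : t ^ 30 = (t ^ 10) ^ 3 by rewrite -expnM.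
  have -> : d1 ^ 30 * d1 ^ 30 = (d1 ^ 3) ^ 20 by rewrite -expnD -expnM.
  apply: (@leq_trans (n ^ 6 * (n ^ 3 * n ^ 20))).
    by apply: leq_mul; [rewrite leq_exp2r | apply: leq_mul; rewrite leq_exp2r].
  by rewrite -!expnD; apply: leq_pexp2l.
have A : 64 * (t * t) <= n by apply: leq_trans hT; exact: leq_mul.
have B : 64 * (t * (d1 * d1)) <= n by apply: leq_trans hD; exact: leq_mul.
apply: (@leq_trans (2 * (4 * t) * (4 * t + 4 * (d1 * d1)))).
  apply: leq_mul; first by rewrite leq_mul2l.
  by clear -het hc; lia.
have -> : 2 * (4 * t) * (4 * t + 4 * (d1 * d1)) = 32 * (t * t) + 32 * (t * (d1 * d1)) by ring.
move: A B; move: (t * (d1 * d1)) (t * t) => x y; lia.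
Qed.

Local Open Scope ring_scope.

Theorem lemma2p3 :
  exists c1 : R, 0 < c1 /\
  (* (1) *)
  (forall g : nat -> nat, little_o_cuberoot g ->
     exists N : nat, forall (n m d1 d2 : nat), (N <= n)%N ->
       (n * d1 = m * d2)%N -> (d2 <= d1)%N -> (d1 ^ 3 <= n)%N ->
       forall H : bigraph n m, min_deg_ge2 H -> (#|H| <= g n)%N ->
         prob_sub d1 d2 H <= c1 * Num.sqrt (bratio n m d1 d2) ^+ #|H|) /\
  (* (2) and (3) *)
  (exists N : nat, forall (n m d1 d2 : nat), (N <= n)%N ->
     (n * d1 = m * d2)%N -> (d2 <= d1)%N -> (d1 ^ 3 <= n)%N ->
     forall (k : nat) (alpha : bigraph n m), is_cycle k alpha -> (k ^ 10 <= n)%N ->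
       prob_sub d1 d2 alpha <= c1 * bratio n m d1 d2 ^+ k /\
       (forall (j : nat) (beta : bigraph n m), is_cycle j beta -> (j ^ 10 <= n)%N ->
          prob_sub d1 d2 (alpha :|: beta) <=
            c1 * Num.sqrt (bratio n m d1 d2) ^+ (2 * j + 2 * k - #|alpha :&: beta|))).
Proof.
exists 2; split; first by [].
split.
  move=> g hg.
  have a0 : (0 : R) < 20%:R ^+ 3 by rewrite exprn_gt0 // ltr0n.
  have a1 : (0 : R) < (20%:R ^+ 3)^-1 by rewrite invr_gt0.
  have [N0 hN0] := hg _ a1.
  exists N0 => n m d1 d2 hn hnm h21 hd H hH hHg.
  apply: main_bound hnm hH _.
  apply: (@num1 20) => //.
  have hgn : ((20 * g n) ^ 3 <= n)%N.
    rewrite -(ler_nat R) natrX natrM exprMn.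
    have := ler_wpM2l (ltW a0) (hN0 n hn).
    by move=> h; apply: le_trans h _; rewrite mulrA mulfV ?gt_eqF // mul1r.
  by apply: leq_trans _ hgn; rewrite leq_exp2r // leq_mul2l hHg orbT.
exists (64 ^ 5)%N => n m d1 d2 hn hnm h21 hd k alpha hal hk.
have [cA dA] := cycle_props hal.
split.
  have h4 : (#|alpha| <= 4 * k)%N by rewrite cA leq_mul2r orbT.
  have := main_bound hnm dA (@num2 64 k #|alpha| n d1 d2 (leqnn _) hn hk hd h21 h4).
  by rewrite cA exprM sqr_sqrtr ?bratio_ge0.
move=> j beta hbe hj.
have [cB dB] := cycle_props hbe.
have e : #|alpha :|: beta| = (2 * j + 2 * k - #|alpha :&: beta|)%N.
  by rewrite -cA -cB addnC -cardsUI addnK.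
rewrite -e; apply: main_bound hnm (min_deg_U dA dB) _.
have hU := cardsUI alpha beta.
apply: (@num2 64 (maxn k j)) => //.
  by rewrite /maxn; case: ifP.
rewrite cA cB in hU; lia.
Qed.
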